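(* Let $(u,x)$ be an enhanced state of an oriented link diagram $D$ with $q(u,x)=j_{\max}(D)-2$. Then $\Phi(u)\le 1$. Moreover, if $\Phi(u)=0$ then $x=x_z^+$ for some $z\in Z(u)$, and if $\Phi(u)=1$ then $x=x_+$.
   Context: $D$ is an oriented link diagram with ordered crossings $c_1,\dots,c_n$, $n_+$ positive and $n_-$ negative. A state is $u\in\{0,1\}^n$, $|u|=\sum u_i$, $\vec1=(1,\dots,1)$; $u\succ_i v$ means $u_i=1,v_i=0$, $u_j=v_j$ otherwise. $D(u)$ is obtained by smoothing each $c_i$ by its Kauffman $u_i$-smoothing; $Z(u)$ is its set of circles; going from $u$ to $v$ with $u\succ_i v$ is surgery along the chord of $c_i$, a merging if that chord joins two different circles. $\Phi(u)$ is the number of mergings in any chain $\vec1=u_0\succ u_1\succ\cdots\succ u_k=u$. An enhancement is a map $x\colon Z(u)\to\{\pm1\}$, $Z_\pm(u,x)$ the circles labelled $\pm1$; $q(u,x)=n_+-2n_-+|u|+|Z_+(u,x)|-|Z_-(u,x)|$; $j_{\max}(D)=\max q(u,x)$. $x_+$ is the constant enhancement $+1$, and for $z\in Z(u)$, $x_z^+$ assigns $-1$ to $z$ and $+1$ to every other circle. *)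

(* Defs.v *)
From HB Require Import structures.
From mathcomp Require Import all_boot all_order all_algebra.
Set Implicit Arguments. Unset Strict Implicit. Unset Printing Implicit Defensive.
Import Order.TTheory GRing.Theory Num.Theory.

(* An oriented link diagram with [ncr] crossings c_0,...,c_(ncr-1), plus
   [nfree] crossingless (unknotted, unlinked-in-the-diagram) circle components.
   At crossing i the four half-edges ("darts") are (i,0),(i,1),(i,2),(i,3),
   listed COUNTERCLOCKWISE, where (i,0) is the INCOMING end of the under-strand
   (so (i,2) is its outgoing end) and (i,1),(i,3) are the two ends of the
   over-strand.  [posc i] = true iff the over-strand runs from (i,3) to (i,1)
   (this is exactly the case of a positive crossing).  [edge] pairs the darts
   joined by an edge of the underlying 4-valent plane graph. *)
Record diagram := Diagram {
  ncr : nat;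
  nfree : nat;
  edge : 'I_ncr * 'I_4 -> 'I_ncr * 'I_4;
  posc : 'I_ncr -> bool }.

Notation dart D := ((ordinal (ncr D)) * (ordinal 4))%type.

Arguments edge : clear implicits.
Arguments posc : clear implicits.

Section Diagram.
Variable D : diagram.
Local Notation n := (ncr D).

Definition rot (d : dart D) : dart D := (d.1, inord ((d.2).+1 %% 4)).

Definition incoming (d : dart D) : bool :=
  (val d.2 == 0) || (val d.2 == (if posc D d.1 then 3 else 1)).

Definition graph_rel : rel (dart D) :=
  fun a b => [|| b == edge D a, b == rot a | a == rot b].

(* Well-formedness: [edge] is a fixed-point-free involution compatible with the
   orientation (each edge goes from an outgoing dart to an incoming one), and the
   combinatorial map (rot, edge) is planar: by Euler's formula every connected
   component has V - E + F = 2, i.e. #faces = n + 2 * #components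
   (V = n, E = 2n), where faces are the orbits of rot \o edge. *)
Definition is_diagram : Prop :=
  [/\ forall d, edge D (edge D d) = d,
      forall d, incoming (edge D d) = ~~ incoming d &
      fcard (fun d => rot (edge D d)) predT = n + 2 * n_comp graph_rel predT].

Definition npos : nat := #|[set i | posc D i]|.
Definition nneg : nat := #|[set i | ~~ posc D i]|.

Definition state := {ffun 'I_n -> bool}.
Definition ones : state := [ffun => true].
Definition weight (u : state) : nat := #|[set i | u i]|.

(* Kauffman smoothing at crossing i: the 0-smoothing (A-smoothing, joining the
   A-regions) connects dart 0 with 1 and 2 with 3; the 1-smoothing (B-smoothing)
   connects 0 with 3 and 1 with 2. *)
Definition smooth (u : state) (d : dart D) : dart D :=
  (d.1, if u d.1 then inord (3 - d.2) else inord (if odd d.2 then d.2.-1 else d.2.+1)).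

Definition circ_rel (u : state) : rel (dart D) :=
  fun a b => (b == edge D a) || (b == smooth u a).

(* Z(u): circles of D(u): those passing through crossings (represented by the
   root dart of their component), plus the crossingless circles. *)
Definition Z (u : state) : finType :=
  ({d : dart D | fingraph.root (circ_rel u) d == d} + 'I_(nfree D))%type.

(* Enhancements: x c = true means label +1, false means label -1. *)
Definition enh (u : state) := {ffun Z u -> bool}.
Definition xplus (u : state) : enh u := [ffun => true].
Definition xzplus (u : state) (z : Z u) : enh u := [ffun c => c != z].

Definition Zplus (u : state) (x : enh u) : nat := #|[set c | x c]|.
Definition Zminus (u : state) (x : enh u) : nat := #|[set c | ~~ x c]|.

Definition qdeg (u : state) (x : enh u) : int :=
  (npos%:Z - 2 * (nneg%:Z) + (weight u)%:Z + (Zplus x)%:Z - (Zminus x)%:Z)%R.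

Definition jmax : int :=
  \big[Num.max/qdeg (xplus ones)]_(u : state)
     \big[Num.max/qdeg (xplus ones)]_(x : enh u) qdeg x.

(* Surgery along the chord of c_i in D(v) (with v_i = 1) is a merging iff the
   two arcs of the 1-smoothing at c_i (through darts 0 and 1 respectively) lie
   on different circles of D(v). *)
Definition merging (v : state) (i : 'I_n) : bool :=
  ~~ connect (circ_rel v) (i, inord 0) (i, inord 1).

(* Phi(u): number of mergings in the chain 1 = w_0 >= w_1 >= ... >= w_n = u,
   where w_k agrees with u on coordinates < k and is 1 elsewhere (steps with
   w_k = w_(k+1) are skipped); this is one particular chain from 1 to u. *)
Definition chain_state (u : state) (k : nat) : state :=
  [ffun j : 'I_n => if (j < k)%N then u j else true].

Definition Phi (u : state) : nat :=
  \sum_(k < n) ((~~ u k) && merging (chain_state u k) k).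

End Diagram.

(* Main.v *)
Require Import Defs.
From mathcomp Require Import all_boot all_order all_algebra all_fingroup zify.
Set Implicit Arguments. Unset Strict Implicit. Unset Printing Implicit Defensive.


Section Gen.
Variable T : finType.
Implicit Types e : rel T.

Lemma ncompT e : n_comp e T = #|roots e|.
Proof. by apply: eq_card => x; rewrite !inE andbT. Qed.

Lemma ncomp_le_sub e1 e2 : connect_sym e1 -> connect_sym e2 ->
  (forall x y, connect e1 x y -> connect e2 x y) -> n_comp e2 T <= n_comp e1 T.
Proof.
move=> sym1 sym2 sub; rewrite !ncompT.
apply: (leq_trans _ (leq_image_card (fingraph.root e2) _)).
apply/subset_leq_card/subsetP => r; rewrite inE => r2.
have -> : r = fingraph.root e2 (fingraph.root e1 r).
  rewrite -{1}(eqP r2); apply/(fingraph.rootP sym2)/sub; exact: connect_root.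
apply: map_f; rewrite mem_enum; exact: roots_root sym1 _.
Qed.

Definition addE (a b : T) : rel T :=
  fun x y => ((x == a) && (y == b)) || ((x == b) && (y == a)).

Lemma connect_addE e a b x y : connect (relU e (addE a b)) x y ->
  [\/ connect e x y, connect e x a && connect e b y | connect e x b && connect e a y].
Proof.
move/connectP=> [p pp ->]; elim: p x pp => [|z p IH] x /=.
  by move=> _; apply: Or31; apply: connect0.
case/andP=> exz /IH {IH} [H|/andP[H1 H2]|/andP[H1 H2]]; case/orP: exz => [exz|].
- by apply: Or31; apply: connect_trans (connect1 exz) H.
- by move=> /orP[]/andP[/eqP?/eqP?]; subst; [apply: Or32|apply: Or33]; rewrite connect0.
- by apply: Or32; rewrite H2 (connect_trans (connect1 exz) H1).
- by move=> /orP[]/andP[/eqP?/eqP?]; subst; [apply: Or32; rewrite connect0|apply: Or31].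
- by apply: Or33; rewrite H2 (connect_trans (connect1 exz) H1).
- by move=> /orP[]/andP[/eqP?/eqP?]; subst; [apply: Or31|apply: Or33; rewrite connect0].
Qed.

Lemma addE_sym a b : symmetric (addE a b).
Proof. by move=> x y; rewrite /addE orbC (andbC (y == a)) (andbC (y == b)). Qed.

Lemma ncomp_addE e a b : connect_sym e ->
  n_comp e T <= (n_comp (relU e (addE a b)) T).+1.
Proof.
move=> syme; set e' := relU e (addE a b); rewrite !ncompT.
have syme' : connect_sym e' by apply: relU_sym => //; apply: sym_connect_sym; apply: addE_sym.
rewrite (cardD1 (fingraph.root e a)) addnC -addn1 leq_add ?leq_b1 //.
set B := [predD1 roots e & fingraph.root e a].
rewrite -(@card_in_image _ _ (fingraph.root e') B).
  apply/subset_leq_card/subsetP => r /mapP [x _ ->]; exact: roots_root.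
move=> x y; rewrite !inE => /andP[xa xr] /andP[ya yr] /(fingraph.rootP syme') /connect_addE.
case=> [H|/andP[H _]|/andP[_ H]].
- by rewrite -(eqP xr) -(eqP yr); apply/(fingraph.rootP syme).
- by move/(fingraph.rootP syme): H; rewrite (eqP xr) => H; rewrite H eqxx in xa.
- by move/(fingraph.rootP syme): H; rewrite (eqP yr) => H; rewrite H eqxx in ya.
Qed.


Lemma porbit_fconnect (s : {perm T}) x y : (y \in porbit s x) = fconnect s x y.
Proof.
apply/porbitP/idP => [[i ->]|H]; first by rewrite permX fconnect_iter.
by exists (findex s x y); rewrite permX iter_findex.
Qed.

Lemma card_porbits (s : {perm T}) : #|porbits s| = #|froots s|.
Proof.
have -> : porbits s = porbit s @: [set x | froots s x].
  apply/setP => C; apply/imsetP/imsetP => [[x _ ->]|[x _ ->]]; last by exists x.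
  exists (froot s x); first by rewrite inE; apply: roots_root; apply: fconnect_sym; apply: perm_inj.
  apply/setP => y; rewrite !porbit_fconnect.
  apply: same_connect; first by apply: fconnect_sym; apply: perm_inj.
  exact: connect_root.
rewrite card_in_imset; first by apply: eq_card => x; rewrite inE.
move=> x y; rewrite !inE => rx ry /setP /(_ y); rewrite !porbit_fconnect connect0 => H.
have sym : connect_sym (frel s) by apply: fconnect_sym; apply: perm_inj.
by rewrite -(eqP rx) -(eqP ry); apply/(fingraph.rootP sym).
Qed.

Lemma porbits_mul_tpermR (s : {perm T}) x y :
  #|porbits (s * tperm x y)%g| + (x \notin porbit s y).*2 = #|porbits s| + (x != y).
Proof.
rewrite -porbitsV invMg tpermV -(porbitsV s) -(porbitV s).
exact: porbits_mul_tperm.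
Qed.

Lemma porbit_tperm_avoid (s : {perm T}) a b x :
  a \notin porbit s x -> b \notin porbit s x ->
  porbit (s * tperm a b)%g x =i porbit s x.
Proof.
move=> ha hb.
have E k : ((s * tperm a b) ^+ k)%g x = (s ^+ k)%g x.
  elim: k => [|k IH]; first by rewrite !expg0.
  rewrite !expgSr !permM IH tpermD //.
    by apply: contraNneq ha => ->; rewrite -permM -expgSr mem_porbit.
  by apply: contraNneq hb => ->; rewrite -permM -expgSr mem_porbit.
move=> y; apply/porbitP/porbitP => [[k ->]|[k ->]]; exists k; by rewrite E.
Qed.

Definition erel (f g : T -> T) : rel T :=
  fun x y => [|| y == f x, x == f y, y == g x | x == g y].

Lemma erel_sym f g : symmetric (erel f g).
Proof.
move=> x y; rewrite /erel; apply/idP/idP => /or4P[]/eqP->; by rewrite eqxx ?orbT.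
Qed.

Lemma erel_csym f g : connect_sym (erel f g).
Proof. apply: sym_connect_sym; exact: erel_sym. Qed.

Lemma walk (al r : {perm T}) a b :
  b \in porbit (al * r)%g a \/ connect (erel al (r * tperm a b)%g) a b.
Proof.
set X := (al * r)%g; set r' := (r * tperm a b)%g; set e' := erel al r'.
have Xr y : X y = tperm a b (r' (al y)).
  by rewrite /X /r' !permM tpermK.
have Q k : [|| connect e' a (iter k X a), fconnect X a b | connect e' a b].
  elim: k => [|k]; first by rewrite connect0.
  case/or3P => [H||]; last 2 first; try by move=> ->; rewrite ?orbT.
  rewrite iterS; set y := iter k X a.
  case: (eqVneq (r' (al y)) a) => [E|Ea].
    apply/or3P; apply: Or32; have -> : b = X y by rewrite Xr E tpermL.
    by rewrite /y -iterS fconnect_iter.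
  case: (eqVneq (r' (al y)) b) => [E|Eb].
    apply/orP; right; apply/orP; right.
    apply: (connect_trans H); rewrite -E.
    apply: (connect_trans (y := al y)); apply: connect1; by rewrite /e' /erel eqxx ?orbT.
  apply/orP; left; rewrite Xr tpermD 1?eq_sym //.
  apply: (connect_trans H); apply: (connect_trans (y := al y)); apply: connect1;
    by rewrite /e' /erel eqxx ?orbT.
have injX : injective X by apply: perm_inj.
have o0 := fingraph.order_gt0 X a.
move: (Q (fingraph.order X a).-1); case/or3P => [H|H|H].
- right; set y := iter _ X a in H.
  have Xy : X y = a by rewrite /y -iterS prednK // iter_order.
  move: Xy; rewrite Xr => /(canRL (tpermK a b)); rewrite tpermL => E.
  apply: (connect_trans H); rewrite -E.
  apply: (connect_trans (y := al y)); apply: connect1; by rewrite /e' /erel eqxx ?orbT.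
- by left; rewrite porbit_fconnect.
- by right.
Qed.


Lemma conn_tperm (E : rel T) a b z : connect_sym E -> connect E a b -> connect E z (tperm a b z).
Proof.
move=> sE ab; case: tpermP => [->|->|_ _]; [by []| by rewrite sE | exact: connect0].
Qed.

Lemma erel_sub (E : rel T) (al r : {perm T}) a b : connect_sym E -> connect E a b ->
  (forall x y, erel al (r * tperm a b)%g x y -> connect E x y) ->
  forall x y, connect (erel al r) x y -> connect E x y.
Proof.
move=> sE ab sub; apply: connect_sub => x y /or4P[]/eqP->.
- by apply: sub; rewrite /erel eqxx.
- by rewrite sE; apply: sub; rewrite /erel eqxx.
- have -> : r x = tperm a b ((r * tperm a b)%g x) by rewrite permM tpermK.
  apply: connect_trans (conn_tperm _ sE ab); apply: sub; by rewrite /erel eqxx ?orbT.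
- rewrite sE; have -> : r y = tperm a b ((r * tperm a b)%g y) by rewrite permM tpermK.
  apply: connect_trans (conn_tperm _ sE ab); apply: sub; by rewrite /erel eqxx ?orbT.
Qed.

Definition Kc (al r : {perm T}) := n_comp (erel al r) T.
Definition Fc (al r : {perm T}) := #|porbits (al * r)%g|.

Lemma step_ineq (al r : {perm T}) a b : a != b ->
  (Kc al (r * tperm a b)%g).*2 + Fc al r <= (Kc al r).*2 + Fc al (r * tperm a b)%g + 1.
Proof.
move=> ab; rewrite /Fc mulgA.
have H := porbits_mul_tpermR (al * r)%g a b; rewrite ab in H.
set r' := (r * tperm a b)%g in H *.
rewrite -!muln2.
case: (boolP (a \in porbit (al * r)%g b)) => inab; rewrite inab /= ?addn0 in H.
- have sE : connect_sym (relU (erel al r') (addE a b)).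
    by apply: relU_sym; [apply: erel_csym | apply: sym_connect_sym; apply: addE_sym].
  have Hk : Kc al r' <= (Kc al r).+1.
    apply: (leq_trans (ncomp_addE _ _ (erel_csym _ _))).
    rewrite ltnS /Kc.
    apply: ncomp_le_sub; [exact: erel_csym | exact: sE | ].
    apply: (erel_sub (a:=a) (b:=b) sE); first by apply: connect1; rewrite /= /addE !eqxx orbT.
    by move=> x y exy; apply: connect1; rewrite /= exy.
  rewrite H; set F := #|porbits _|; lia.
- have w := walk al r a b; rewrite porbit_sym (negbTE inab) in w.
  case: w => // cab.
  have Hk : Kc al r' <= Kc al r.
    apply: ncomp_le_sub; [exact: erel_csym | exact: erel_csym | ].
    apply: (erel_sub (a:=a) (b:=b) (erel_csym _ _) cab).
    by move=> x y; apply: connect1.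
  move: H; set F1 := #|porbits (al * r * tperm a b)%g|; set F0 := #|porbits (al * r)%g|; lia.
Qed.


Section Dihedral.
Variables (al s : {perm T}).
Hypotheses (alK : involutive al) (sK : involutive s)
  (al_fp : forall x, al x != x) (s_fp : forall x, s x != x).
Local Notation rho := (al * s)%g.

Lemma rhoE z : rho z = s (al z). Proof. by rewrite permM. Qed.
Lemma s_rho z : s (rho z) = al z. Proof. by rewrite rhoE sK. Qed.
Lemma rho_s_rho z : rho (s (rho z)) = s z. Proof. by rewrite s_rho rhoE alK. Qed.

Lemma rho_sym : connect_sym (frel rho).
Proof. apply: fconnect_sym; exact: perm_inj. Qed.

Lemma fcon_s x y : fconnect rho x y -> fconnect rho (s x) (s y).
Proof.
move=> /iter_findex <-; elim: (findex _ _ _) => [|k IH] /=; first exact: connect0.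
apply: (connect_trans IH); rewrite rho_sym.
by apply: connect1; rewrite /= rho_s_rho.
Qed.

Lemma fcon_s_neq x : ~~ fconnect rho x (s x).
Proof.
apply/negP => /iter_findex; set k := findex _ _ _ => Hk.
have E j : j <= k -> s (iter j rho x) = iter (k - j) rho x.
  elim: j => [|j IH] Hj; first by rewrite subn0 Hk.
  rewrite iterS s_rho.
  have := IH (ltnW Hj).
  have -> : k - j = (k - j.+1).+1 by rewrite subnSK.
  rewrite iterS rhoE => /(can_inj sK) ->; by rewrite alK.
case: (odd k) / boolP => ok.
- have Hj : (k./2).+1 <= k by rewrite -{2}(odd_double_half k) ok add1n ltnS -addnn leq_addr.
  have := E _ Hj.
  have -> : k - (k./2).+1 = k./2 by rewrite -{1}(odd_double_half k) ok add1n subSS -addnn addnK.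
  by rewrite iterS s_rho => /eqP; rewrite (negbTE (al_fp _)).
- have Hj : k./2 <= k by rewrite -{2}(odd_double_half k) (negbTE ok) add0n -addnn leq_addr.
  have := E _ Hj.
  have -> : k - k./2 = k./2 by rewrite -{1}(odd_double_half k) (negbTE ok) add0n -addnn addnK.
  by move/eqP; rewrite (negbTE (s_fp _)).
Qed.

Lemma fcon_sub x y : fconnect rho x y -> connect (erel al s) x y.
Proof.
apply: connect_sub => {}x _ /eqP <-; rewrite rhoE.
apply: (connect_trans (y := al x)); apply: connect1; by rewrite /erel eqxx ?orbT.
Qed.

Lemma erel_fcon x y : connect (erel al s) x y -> fconnect rho x y || fconnect rho (s x) y.
Proof.
have cl : closed (erel al s) [pred w | fconnect rho x w || fconnect rho (s x) w].
  apply: (intro_closed (erel_csym _ _)).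
  have Ps w : fconnect rho x w || fconnect rho (s x) w ->
              fconnect rho x (s w) || fconnect rho (s x) (s w).
    case/orP => H; apply/orP; [right|left]; first exact: fcon_s.
    by rewrite -[x]sK; apply: fcon_s.
  have Pal w : fconnect rho x w || fconnect rho (s x) w ->
              fconnect rho x (al w) || fconnect rho (s x) (al w).
    move=> H; rewrite -(s_rho w); apply: Ps.
    by case/orP: H => H; apply/orP; [left|right]; apply: (connect_trans H); apply: connect1; rewrite /= eqxx.
  move=> u v; rewrite !inE => /or4P[]/eqP->; rewrite ?alK ?sK //.
  - exact: Pal.
  - by move=> H; have := Pal _ H; rewrite alK.
  - exact: Ps.
  - by move=> H; have := Ps _ H; rewrite sK.
by move=> /(closed_connect cl); rewrite !inE connect0 /= => <-.
Qed.

Lemma card_rho : #|porbits rho| = (n_comp (erel al s) T).*2.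
Proof.
set e := erel al s.
have se : connect_sym e := erel_csym al s.
rewrite card_porbits ncompT -muln2.
pose g x := (fingraph.root e x, x == froot rho (fingraph.root e x)).
have -> : #|froots rho| = #|[set x | froots rho x]| by apply: eq_card => x; rewrite inE.
have Hroot x y : fconnect rho x y -> froot rho x = froot rho y.
  by move=> H; apply/(fingraph.rootP rho_sym).
have froot_e x : connect e x (froot rho x) by apply: fcon_sub; apply: connect_root.
have root_e x y : connect e x y -> fingraph.root e x = fingraph.root e y.
  by move=> H; apply/(fingraph.rootP se).
have Hfr x : froots rho x -> froot rho x = x by move/eqP.
have ne r : froot rho r != froot rho (s r).
  apply/negP => /eqP/(fingraph.rootP rho_sym) H; by move: (fcon_s_neq r); rewrite H.
rewrite -(@card_in_imset _ _ g).
  have -> : g @: [set x | froots rho x] = setX [set x | roots e x] [set: bool].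
    apply/setP => [[r bb]]; rewrite !inE /=.
    apply/imsetP/idP => [[x _ [-> _]]|rr].
      by rewrite andbT; exact: (roots_root se).
    have rr' : fingraph.root e r = r by move: rr; rewrite andbT => /eqP.
    case: bb.
    - exists (froot rho r); first by rewrite inE; apply: roots_root; exact: rho_sym.
      rewrite /g -(root_e _ _ (froot_e r)) rr' eqxx //.
    - exists (froot rho (s r)); first by rewrite inE; apply: roots_root; exact: rho_sym.
      rewrite /g; have -> : fingraph.root e (froot rho (s r)) = r.
        rewrite -(root_e _ _ (froot_e (s r))) -rr'; apply: root_e.
        by rewrite se rr'; apply: connect1; rewrite /e /erel eqxx ?orbT.
      by rewrite eq_sym (negbTE (ne r)).
  by rewrite cardsX cardsT card_bool; congr (_ * _); apply: eq_card => x; rewrite inE.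
move=> x y; rewrite !inE => rx ry [Er Eb].
have cx : connect e (fingraph.root e x) x by rewrite se; apply: connect_root.
have cy : connect e (fingraph.root e y) y by rewrite se; apply: connect_root.
rewrite -Er in cy Eb; set r := fingraph.root e x in cx cy Eb; clearbody r; clear Er.
have Hx : x = froot rho r \/ x = froot rho (s r).
  case/orP: (erel_fcon cx) => H; [left|right]; by rewrite -(Hfr _ rx); apply: esym; apply: Hroot.
have Hy : y = froot rho r \/ y = froot rho (s r).
  case/orP: (erel_fcon cy) => H; [left|right]; by rewrite -(Hfr _ ry); apply: esym; apply: Hroot.
by case: Hx Hy Eb => -> [->|->] //; rewrite eqxx ?[froot rho (s r) == _]eq_sym (negbTE (ne r)).
Qed.

End Dihedral.

End Gen.

Require Import Defs.


Section Dia.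
Variable D : diagram.
Hypothesis HD : is_diagram D.
Local Notation n := (ncr D).
Local Notation dT := (dart D).

Lemma edgeK : involutive (edge D). Proof. by case: HD. Qed.

Lemma edge_fp (d : dT) : edge D d != d.
Proof.
apply/eqP => E; case: HD => _ H _; have := H d; rewrite E.
by case: (incoming d).
Qed.

Definition edgep : {perm dT} := perm (can_inj edgeK).
Lemma edgepE d : edgep d = edge D d. Proof. by rewrite permE. Qed.

Lemma ord4P (P : 'I_4 -> Prop) : P (inord 0) -> P (inord 1) -> P (inord 2) -> P (inord 3) ->
  forall k, P k.
Proof.
move=> H0 H1 H2 H3 k.
have -> : k = inord (val k) by rewrite inord_val.
by case: k => [[|[|[|[|k]]]] Hk] //=.
Qed.

Lemma rot_inj : injective (@rot D).
Proof.
have K : cancel (@rot D) (fun d => (d.1, inord ((d.2).+3 %% 4))).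
  move=> [c k]; rewrite /rot /=; congr (_, _); move: k; apply: ord4P;
  by apply/val_inj; rewrite /= !inordK.
exact: can_inj K.
Qed.

Definition rotp : {perm dT} := perm rot_inj.
Lemma rotpE d : rotp d = rot d. Proof. by rewrite permE. Qed.

Lemma smoothK (u : state D) : involutive (smooth u).
Proof.
move=> [c k]; rewrite /smooth /=; case: (u c); congr (_, _); move: k; apply: ord4P;
by apply/val_inj; rewrite /= !inordK.
Qed.

Lemma smooth_fp (u : state D) d : smooth u d != d.
Proof.
case: d => c k; rewrite /smooth /=; case: (u c); apply/negP => /eqP [];
move: k; apply: ord4P; by move/(congr1 val); rewrite /= !inordK.
Qed.

Definition smoothp (u : state D) : {perm dT} := perm (can_inj (smoothK u)).
Lemma smoothpE u d : smoothp u d = smooth u d. Proof. by rewrite permE. Qed.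


Lemma erel_edge_eq (r : {perm dT}) x y :
  erel edgep r x y = [|| y == edge D x, y == r x | x == r y].
Proof.
rewrite /erel !edgepE.
have -> : (x == edge D y) = (y == edge D x).
  by apply/eqP/eqP => [->|->]; rewrite edgeK.
by rewrite orbA orbb.
Qed.

Lemma K0E : Kc edgep rotp = n_comp (@graph_rel D) predT.
Proof.
rewrite /Kc; apply: eq_n_comp => x y; apply: eq_connect => a b.
by rewrite erel_edge_eq !rotpE /graph_rel.
Qed.

Lemma F0E : Fc edgep rotp = fcard (fun d => Defs.rot (edge D d)) predT.
Proof.
rewrite /Fc card_porbits.
have -> : fcard (fun d => Defs.rot (edge D d)) predT = #|froots (edgep * rotp)%g|.
  apply: eq_card => x; rewrite !inE andbT.
  rewrite /roots; congr (_ == _); apply: eq_root => a b.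
  by rewrite /= permM edgepE rotpE.
by [].
Qed.

Lemma circE (u : state D) : connect (circ_rel u) =2 connect (erel edgep (smoothp u)).
Proof.
apply: eq_connect => x y; rewrite erel_edge_eq !smoothpE /circ_rel.
have -> : (x == smooth u y) = (y == smooth u x).
  by apply/eqP/eqP => [->|->]; rewrite smoothK.
by rewrite orbb.
Qed.

Definition cnt (u : state D) := #|roots (circ_rel u)|.

Lemma cntE u : cnt u = Kc edgep (smoothp u).
Proof. by rewrite /cnt /Kc -ncompT; apply: eq_n_comp; apply: circE. Qed.

Lemma Fc_smooth u : Fc edgep (smoothp u) = (cnt u).*2.
Proof.
rewrite cntE /Fc /Kc; apply: card_rho.
- by move=> x; rewrite !edgepE edgeK.
- by move=> x; rewrite !smoothpE smoothK.
- by move=> x; rewrite edgepE edge_fp.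
- by move=> x; rewrite smoothpE smooth_fp.
Qed.


Definition ta (w : state D) (j : 'I_n) : dT := (j, inord (if w j then 1 else 0)).
Definition tb (w : state D) (j : 'I_n) : dT := (j, inord (if w j then 3 else 2)).

Lemma ta_tb w j : ta w j != tb w j.
Proof.
rewrite /ta /tb xpair_eqE eqxx /=; case: (w j); by rewrite -val_eqE /= !inordK.
Qed.

Lemma tperm_rot (w : state D) (j : 'I_n) (k : 'I_4) :
  tperm (ta w j) (tb w j) (Defs.rot (j, k)) = smooth w (j, k).
Proof.
rewrite permE /= /ta /tb /Defs.rot /smooth /= !xpair_eqE eqxx /=.
case: (w j); move: k; apply: ord4P;
  rewrite -!val_eqE /= ?inordK //=; congr (_, _); apply/val_inj; by rewrite /= ?inordK.
Qed.

Lemma tperm_other (w : state D) (j : 'I_n) (z : dT) : z.1 != j ->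
  tperm (ta w j) (tb w j) z = z.
Proof.
rewrite permE /= /ta /tb; case: z => c k /= cj; by rewrite !xpair_eqE (negbTE cj).
Qed.


Fixpoint rch (w : state D) (i : 'I_n) (t : nat) : {perm dT} :=
  if t is t'.+1 then
    (if insub t' is Some j then
       (if j != i then (rch w i t' * tperm (ta w j) (tb w j))%g else rch w i t')
     else rch w i t')
  else rotp.

Lemma rchE w i t d :
  rch w i t d = if (d.1 != i) && (d.1 < t) then smooth w d else Defs.rot d.
Proof.
elim: t d => [|t IH] d /=; first by rewrite ltn0 andbF rotpE.
case: insubP => [j _ Ej|Hn].
- case: (eqVneq j i) => [ji|ji] /=.
  + rewrite IH; subst j; case: (eqVneq d.1 i) => //= di.
    have ne : (d.1 : nat) != t by rewrite -Ej; apply: contra di => /eqP/ord_inj ->.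
    by rewrite [in RHS]ltnS [in RHS]leq_eqVlt (negbTE ne).
  + rewrite permM IH.
    case: (eqVneq d.1 j) => [dj|dj] /=.
    * have -> : d.1 < t = false by rewrite -Ej dj ltnn.
      have -> : d.1 < t.+1 by rewrite -Ej dj.
      rewrite dj ji /=; case: d dj => c k /= ->; exact: tperm_rot.
    * have -> : (d.1 < t.+1) = (d.1 < t).
        have ne : (d.1 : nat) != t by rewrite -Ej; apply: contra dj => /eqP/ord_inj ->.
        by rewrite ltnS leq_eqVlt (negbTE ne).
      case: ifP => _; apply: tperm_other; by case: d dj.
- rewrite IH; congr (if _ then _ else _); congr (_ && _).
  have dn : d.1 < t by apply: leq_trans (ltn_ord _) _; rewrite leqNgt.
  by rewrite dn ltnS ltnW.
Qed.


Lemma chain_ineq w i t :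
  (Kc edgep (rch w i t)).*2 + Fc edgep rotp + (i < t) <=
  (Kc edgep rotp).*2 + Fc edgep (rch w i t) + t.
Proof.
elim: t => [|t IH] /=; first by [].
case: insubP => [j _ Ej|Hn].
- case: (eqVneq j i) => [ji|ji] /=.
  + subst j; rewrite Ej ltnn /= addn0 in IH; rewrite Ej ltnSn /=.
    by rewrite addn1 addnS ltnS.
  + have := step_ineq edgep (rch w i t) (ta_tb w j).
    have -> : (i < t.+1) = (i < t).
      have ne : (i : nat) != t by rewrite -Ej; apply: contra ji => /eqP/ord_inj ->.
      by rewrite ltnS leq_eqVlt (negbTE ne).
    move: IH; set K1 := Kc edgep (rch w i t); set K2 := Kc edgep (rch w i t * _)%g.
    set K0 := Kc edgep rotp; set F1 := Fc edgep (rch w i t).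
    set F2 := Fc edgep (rch w i t * _)%g; set F0 := Fc edgep rotp.
    move: (i < t) => b; clearbody K1 K2 K0 F1 F2 F0; rewrite -!muln2; lia.
- have it : i < t by apply: leq_trans (ltn_ord i) _; rewrite leqNgt.
  have it1 : i < t.+1 by rewrite ltnS ltnW.
  rewrite it1; rewrite it in IH; rewrite addnS; exact: (leq_trans IH).
Qed.


Lemma smoothp_rch (w v : state D) i : (forall j, j != i -> v j = w j) ->
  smoothp v = (rch w i n * tperm (ta v i) (tb v i))%g.
Proof.
move=> vw; apply/permP => d; rewrite permM rchE smoothpE ltn_ord andbT.
case: (eqVneq d.1 i) => [di|di] /=.
- by case: d di => c k /= ->; rewrite tperm_rot.
- rewrite tperm_other; last by case: d di.
  by rewrite /smooth vw.
Qed.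

Definition dd (i : 'I_n) (k : nat) : dT := (i, inord k).

Lemma smooth_dd (w : state D) i k : w i = true -> k < 4 -> smoothp w (dd i k) = dd i (3 - k).
Proof.
move=> wi k4; rewrite smoothpE /smooth /dd /= wi; congr (_, _); apply/val_inj.
by rewrite /= !inordK //; lia.
Qed.

Lemma dd_neq i k l : k < 4 -> l < 4 -> k != l -> dd i k != dd i l.
Proof.
move=> k4 l4 kl; rewrite /dd xpair_eqE eqxx /= -val_eqE /= !inordK //.
Qed.

Lemma ta_true (w : state D) i : w i = true -> ta w i = dd i 1. Proof. by rewrite /ta /dd => ->. Qed.
Lemma tb_true (w : state D) i : w i = true -> tb w i = dd i 3. Proof. by rewrite /tb /dd => ->. Qed.
Lemma ta_false (w : state D) i : w i = false -> ta w i = dd i 0. Proof. by rewrite /ta /dd => ->. Qed.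
Lemma tb_false (w : state D) i : w i = false -> tb w i = dd i 2. Proof. by rewrite /tb /dd => ->. Qed.

Lemma planar : Fc edgep rotp = n + (Kc edgep rotp).*2.
Proof. by rewrite F0E K0E; case: HD => _ _ ->; rewrite mul2n. Qed.


Lemma key (w w' : state D) (i : 'I_n) : w i = true -> w' i = false ->
  (forall j, j != i -> w' j = w j) ->
  if merging w i then (cnt w').+1 = cnt w else cnt w' = (cnt w).+1.
Proof.
move=> wi w'i weq.
set r2 := rch w i n.
have Sw : smoothp w = (r2 * tperm (dd i 1) (dd i 3))%g.
  by rewrite (@smoothp_rch w w i (fun _ _ => erefl)) ta_true // tb_true.
have Sw' : smoothp w' = (r2 * tperm (dd i 0) (dd i 2))%g.
  by rewrite (smoothp_rch weq) ta_false // tb_false.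
set s := smoothp w.
set rho := (edgep * s)%g.
set X := (edgep * r2)%g.
have rhoX : rho = (X * tperm (dd i 1) (dd i 3))%g by rewrite /rho /s Sw mulgA.
have Xrho : X = (rho * tperm (dd i 1) (dd i 3))%g by rewrite rhoX -mulgA tperm2 mulg1.
have rho'X : (edgep * smoothp w')%g = (X * tperm (dd i 0) (dd i 2))%g by rewrite Sw' mulgA.
have H1 := porbits_mul_tpermR rho (dd i 1) (dd i 3).
rewrite -Xrho dd_neq // in H1.
have H2 := porbits_mul_tpermR X (dd i 0) (dd i 2).
rewrite -rho'X dd_neq // in H2.
have Fw : #|porbits rho| = (cnt w).*2 by rewrite -Fc_smooth.
have Fw' : #|porbits (edgep * smoothp w')%g| = (cnt w').*2 by rewrite -Fc_smooth.
have alK : involutive edgep by move=> x; rewrite !edgepE edgeK.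
have sK : involutive s by move=> x; rewrite /s !smoothpE smoothK.
have alf : forall x, edgep x != x by move=> x; rewrite edgepE edge_fp.
have sf : forall x, s x != x by move=> x; rewrite /s smoothpE smooth_fp.
have s0 : s (dd i 0) = dd i 3 by rewrite /s smooth_dd.
have s1 : s (dd i 1) = dd i 2 by rewrite /s smooth_dd.
have s3 : s (dd i 3) = dd i 0 by rewrite /s smooth_dd.
have s2 : s (dd i 2) = dd i 1 by rewrite /s smooth_dd.
have n03 : ~~ fconnect rho (dd i 0) (dd i 3) by rewrite -s0; apply: (fcon_s_neq alK sK alf sf).
have rsym := rho_sym edgep s.
set E := erel edgep s.
have c03 : connect E (dd i 0) (dd i 3) by apply: connect1; rewrite /E /erel s0 eqxx ?orbT.
have c12 : connect E (dd i 1) (dd i 2) by apply: connect1; rewrite /E /erel s1 eqxx ?orbT.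
rewrite /merging circE -/s -/E.
case: ifP => merg.
-
  have n13 : dd i 1 \notin porbit rho (dd i 3).
    rewrite porbit_fconnect; apply/negP => /fcon_sub c31.
    by rewrite (connect_trans c03 c31) in merg.
  rewrite n13 /= in H1.
  have n1 : dd i 1 \notin porbit rho (dd i 0).
    rewrite porbit_fconnect; apply/negP => /fcon_sub c01.
    by rewrite c01 in merg.
  have n3 : dd i 3 \notin porbit rho (dd i 0) by rewrite porbit_fconnect.
  have n02 : dd i 0 \notin porbit X (dd i 2).
    rewrite porbit_sym Xrho (porbit_tperm_avoid n1 n3) porbit_fconnect.
    apply/negP => /fcon_sub c02.
    have c21 : connect E (dd i 2) (dd i 1) by rewrite erel_csym.
    by rewrite (connect_trans c02 c21) in merg.
  rewrite n02 /= in H2.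
  move: H1 H2; rewrite Fw Fw'; lia.
-
  move/negbFE: merg => c01.
  have := erel_fcon alK sK c01; rewrite s0; case/orP => f01.
  + exfalso.
    have n13 : dd i 1 \notin porbit rho (dd i 3).
      rewrite porbit_fconnect; apply/negP => f31.
      have f13 : fconnect rho (dd i 1) (dd i 3) by rewrite rsym.
      by rewrite (connect_trans f01 f13) in n03.
    rewrite n13 /= in H1.
    have cEall k : k < 4 -> connect E (dd i 0) (dd i k).
      case: k => [|[|[|[|k]]]] // _.
      * exact: connect_trans c01 c12.
    have Kle : Kc edgep s <= Kc edgep r2.
      apply: ncomp_le_sub; [exact: erel_csym | exact: erel_csym |].
      have Hr x : connect E x (r2 x).
        rewrite /r2 rchE ltn_ord andbT; case: (eqVneq x.1 i) => [xi|xi] /=.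
        + case: x xi => c k /= ->.
          have -> : (i, k) = dd i k by rewrite /dd inord_val.
          have -> : Defs.rot (dd i k) = dd i ((k.+1) %% 4) by rewrite /Defs.rot /dd /= inordK.
          have h1 := cEall _ (ltn_ord k).
          have h2 := cEall (k.+1 %% 4) (ltn_mod _ _).
          rewrite erel_csym in h1.
          exact: connect_trans h1 h2.
        + by apply: connect1; rewrite /E /erel /s smoothpE eqxx ?orbT.
      apply: connect_sub => x y /or4P[]/eqP->.
      - by apply: connect1; rewrite /E /erel eqxx.
      - by apply: connect1; rewrite /E /erel eqxx ?orbT.
      - exact: Hr.
      - by rewrite erel_csym; apply: Hr.
    have := chain_ineq w i n; rewrite -/r2 ltn_ord planar.
    move: H1 Kle; rewrite Fw -cntE -/s /Fc -/X; set a := #|porbits X|; move: a (cnt w) (Kc edgep r2) (Kc edgep rotp) => a b c d; rewrite -!muln2 /=; lia.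
  + have i13 : dd i 1 \in porbit rho (dd i 3) by rewrite porbit_fconnect.
    rewrite i13 /= in H1.
    have n1 : dd i 1 \notin porbit rho (dd i 0).
      rewrite porbit_fconnect; apply/negP => f01'.
      have f13 : fconnect rho (dd i 1) (dd i 3) by rewrite rsym.
      by rewrite (connect_trans f01' f13) in n03.
    have n3 : dd i 3 \notin porbit rho (dd i 0) by rewrite porbit_fconnect.
    have i02 : dd i 0 \in porbit X (dd i 2).
      rewrite porbit_sym Xrho (porbit_tperm_avoid n1 n3) porbit_fconnect -s3 -s1.
      exact: (fcon_s alK sK).
    rewrite i02 /= in H2.
    move: H1 H2; rewrite Fw Fw'; lia.
Qed.

End Dia.

Import Order.TTheory GRing.Theory Num.Theory.


Section Dia2.
Variable D : diagram.
Hypothesis HD : is_diagram D.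
Local Notation n := (ncr D).

Lemma cs0 (u : state D) : chain_state u 0 = ones D.
Proof. by apply/ffunP => j; rewrite !ffunE ltn0. Qed.

Lemma csn (u : state D) : chain_state u n = u.
Proof. by apply/ffunP => j; rewrite !ffunE ltn_ord. Qed.

Lemma weight_ones : weight (ones D) = n.
Proof.
rewrite /weight; have -> : [set i | ones D i] = setT by apply/setP => j; rewrite !inE ffunE.
by rewrite cardsT card_ord.
Qed.

Definition gphi (u : state D) (m : nat) : nat :=
  if insub m is Some j then ((~~ u j) && merging (chain_state u m) j : nat) else 0.

Lemma PhiE u : Phi u = \sum_(0 <= m < n) gphi u m.
Proof.
rewrite big_mkord /Phi; apply: eq_bigr => j _.
by rewrite /gphi valK.
Qed.

Lemma phi_inv (u : state D) m : m <= n ->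
  weight (chain_state u m) + cnt (chain_state u m) + 2 * \sum_(0 <= k < m) gphi u k
  = n + cnt (ones D).
Proof.
elim: m => [_|m IH mn].
  by rewrite big_geq // cs0 weight_ones muln0 addn0.
have {IH} IH := IH (ltnW mn).
rewrite big_nat_recr //= [gphi u m]/gphi.
case: insubP => [j _ Ej|]; last by rewrite mn.
have csE : chain_state u m.+1 = if u j then chain_state u m
             else [ffun j' => if j' == j then false else chain_state u m j'].
  apply/ffunP => j'; rewrite !ffunE ltnS leq_eqVlt -Ej.
  case: (eqVneq j' j) => [->|jj] /=; first by rewrite eqxx ltnn; case: (u j); rewrite ?ffunE ?eqxx ?ltnn.
  have -> : (j' == val j :> nat) = false by apply/negbTE; rewrite val_eqE.
  by case: (u j) => /=; rewrite ?ffunE ?(negbTE jj) ?ffunE.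
case: (boolP (u j)) => uj /=.
  by rewrite csE uj addn0.
rewrite csE (negbTE uj).
set w := chain_state u m.
set w' := [ffun _ => _].
have wj : w j = true by rewrite /w ffunE -Ej ltnn.
have w'j : w' j = false by rewrite ffunE eqxx.
have weq : forall j', j' != j -> w' j' = w j' by move=> j' jj; rewrite ffunE (negbTE jj).
have K := key HD wj w'j weq.
have Wt : weight w = (weight w').+1.
  rewrite /weight.
  have -> : [set i | w i] = j |: [set i | w' i].
    apply/setP => i; rewrite !inE; case: (eqVneq i j) => [->|ij] /=; first by rewrite wj.
    by rewrite weq.
  by rewrite cardsU1 inE w'j.
move: K IH; set S := \sum_(0 <= k < m) gphi u k.
case: (merging w j) => /= K; rewrite -/w Wt; lia.
Qed.

Lemma phi_formula (u : state D) : weight u + cnt u + 2 * Phi u = n + cnt (ones D).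
Proof. by rewrite PhiE -(phi_inv u (leqnn n)) csn. Qed.

Lemma cardZ (u : state D) : #|Z u| = cnt u + nfree D.
Proof.
rewrite /Z card_sum card_sig card_ord; congr (_ + _).
Qed.

Lemma Zpm (u : state D) (x : enh u) : Zplus x + Zminus x = #|Z u|.
Proof.
rewrite /Zplus /Zminus.
have -> : [set c | ~~ x c] = ~: [set c | x c] by apply/setP => c; rewrite !inE.
exact: cardsC.
Qed.


Lemma Zplus_xplus (u : state D) : Zplus (xplus u) = #|Z u|.
Proof.
rewrite /Zplus; have -> : [set c | xplus u c] = setT by apply/setP => c; rewrite !inE ffunE.
by rewrite cardsT.
Qed.

Lemma Zminus_xplus (u : state D) : Zminus (xplus u) = 0.
Proof.
rewrite /Zminus; have -> : [set c | ~~ xplus u c] = set0 by apply/setP => c; rewrite !inE ffunE.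
by rewrite cards0.
Qed.

Lemma qdeg_formula (u : state D) (x : enh u) :
  qdeg x = (qdeg (xplus (ones D)) - 2 * ((Phi u + Zminus x)%N)%:Z)%R.
Proof.
rewrite /qdeg Zplus_xplus Zminus_xplus.
have E1 := phi_formula u.
have E2 := Zpm x.
have E3 := cardZ u.
have E4 := cardZ (ones D).
rewrite weight_ones.
move: E1 E2 E3 E4.
move: (weight u) (cnt u) (Phi u) (cnt (ones D)) (Zplus x) (Zminus x) #|Z u| #|Z (ones D)|
  (npos D) (nneg D) (nfree D) => a b c d e f g h i j k.
lia.
Qed.

Lemma jmaxE : jmax D = qdeg (xplus (ones D)).
Proof.
set q1 := qdeg (xplus (ones D)).
have le (u : state D) (x : enh u) : (qdeg x <= q1)%R.
  rewrite (qdeg_formula x) -/q1; move: (Phi u + Zminus x)%N => t; lia.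
rewrite /jmax -/q1; apply/eqP; rewrite eq_le; apply/andP; split.
- elim/big_rec: _ => // u v _ Hv; rewrite ge_max Hv andbT.
  elim/big_rec: _ => // x y _ Hy; rewrite ge_max Hy andbT; exact: le.
- elim/big_rec: _ => // u v _ Hv; by rewrite le_max Hv orbT.
Qed.

End Dia2.


Theorem corollary4p5 (D : diagram) (HD : is_diagram D)
    (u : state D) (x : enh u) :
  qdeg x = (jmax D - 2)%R ->
  [/\ (Phi u <= 1)%N,
      Phi u = 0%N -> exists z : Z u, x = xzplus z &
      Phi u = 1%N -> x = xplus u].
Proof.
rewrite (jmaxE HD) (qdeg_formula HD x) => H.
have T1 : (Phi u + Zminus x = 1)%N.
  move: H; move: (Phi u + Zminus x)%N (qdeg (xplus (ones D))) => t q; lia.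
split.
- lia.
- move=> P0; have : #|[set c | ~~ x c]| == 1%N by rewrite -/(Zminus x); apply/eqP; lia.
  case/cards1P => z Ez; exists z; apply/ffunP => c; rewrite ffunE.
  move/setP: Ez => /(_ c); rewrite !inE.
  by case: (x c) => /=; [move/esym/negbT | move/esym/eqP->; rewrite eqxx].
- move=> P1; have : Zminus x = 0%N by lia.
  move/eqP; rewrite cards_eq0 => /eqP E0; apply/ffunP => c; rewrite ffunE.
  move/setP: E0 => /(_ c); rewrite !inE.
  by case: (x c).
Qed.
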